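(* Let $n\ge1$, $\tau>0$ and $\mathbf{s}=[s_1,\dots,s_n]^T\in\mathbb{R}^n$ (entries not necessarily distinct). Let $\widehat{P}\in\mathbb{R}^{n\times n}$ be defined by $$\widehat{P}[i,j]=\frac{\exp\big(((n+1-2i)s_j-\sum_{k=1}^n|s_j-s_k|)/\tau\big)}{\sum_{l=1}^n\exp\big(((n+1-2i)s_l-\sum_{k=1}^n|s_l-s_k|)/\tau\big)}.$$ Define $z_1,\dots,z_n$ recursively as follows: for row $i$, let $M_i=\{j: \widehat{P}[i,j]=\max_{j'}\widehat{P}[i,j']\}$; if some $j\in M_i$ is not among $z_1,\dots,z_{i-1}$, let $z_i$ be the smallest such $j$; otherwise let $z_i$ be the smallest element of $M_i$. Then $\mathbf{z}=[z_1,\dots,z_n]^T$ is a permutation of $\{1,\dots,n\}$. *)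

(* Defs.v *)
From mathcomp Require Import all_boot all_order all_algebra.
From mathcomp Require Import reals sequences exp.
Set Implicit Arguments. Unset Strict Implicit. Unset Printing Implicit Defensive.
Import Order.TTheory GRing.Theory Num.Theory.
Local Open Scope ring_scope.

Section Defs.
Variables (R : realType) (n : nat) (tau : R) (s : 'I_n -> R).

(* Indices are 0-based: row i : 'I_n corresponds to the paper's row i+1,
   so (n + 1 - 2(i+1)) = n - 1 - 2 i. *)
Definition score (i j : 'I_n) : R :=
  ((n%:R + 1 - 2 * (i.+1)%:R) * s j - \sum_(k < n) `|s j - s k|) / tau.

Definition Phat (i j : 'I_n) : R :=
  expR (score i j) / \sum_(l < n) expR (score i l).

Definition Mset (i : 'I_n) : pred 'I_n :=
  [pred j | [forall j', Phat i j' <= Phat i j]].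

(* enum 'I_n is increasing, so the head of a filtered enum is the smallest
   element of the filter. *)
Definition choose_z (i : 'I_n) (prev : seq 'I_n) : 'I_n :=
  let M := [seq j <- enum 'I_n | Mset i j] in
  match [seq j <- M | j \notin prev] with
  | j :: _ => j
  | [::] => head i M
  end.

Fixpoint zseq (k : nat) : seq 'I_n :=
  match k with
  | 0 => [::]
  | k'.+1 =>
      let p := zseq k' in
      match insub k' with
      | Some i => rcons p (choose_z i p)
      | None => p
      end
  end.

Definition z (i : 'I_n) : 'I_n := nth i (zseq n) i.

End Defs.

(* Main.v *)
Require Import Defs.
From mathcomp Require Import all_boot all_order all_algebra.
From mathcomp Require Import reals sequences exp.
From mathcomp Require Import lra zify.
Set Implicit Arguments. Unset Strict Implicit. Unset Printing Implicit Defensive.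
Import Order.TTheory GRing.Theory Num.Theory.
Local Open Scope ring_scope.

Section P.
Variables (R : realType) (n : nat) (tau : R) (s : 'I_n -> R).
Hypothesis htau : 0 < tau.

Definition gf (i : 'I_n) (x : R) : R :=
  (n%:R + 1 - 2 * (i.+1)%:R) * x - \sum_(k < n) `|x - s k|.

Lemma Mset_g i j : Mset tau s i j -> forall j', gf i (s j') <= gf i (s j).
Proof.
move=> /forallP H j'; have := H j'.
have D : 0 < \sum_(l < n) expR (score tau s i l).
  rewrite (bigD1 j) //=.
  have := expR_gt0 (score tau s i j).
  have : 0 <= \sum_(l < n | l != j) expR (score tau s i l) by apply: sumr_ge0 => l _; apply: ltW; apply: expR_gt0.
  lra.
rewrite /Phat ler_pM2r ?invr_gt0 // ler_expR /score ler_pM2r ?invr_gt0 //.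
Qed.

Lemma gdiff i a b : a < b -> (forall k, ~ (a < s k < b)) ->
  gf i b - gf i a = (b - a) * ((n%:R + 1 - 2 * (i.+1)%:R) -
     (#|[pred k | ~~ (a < s k)]|%:R - #|[pred k | a < s k]|%:R)).
Proof.
move=> ab nb.
have E : \sum_(k < n) `|b - s k| - \sum_(k < n) `|a - s k| =
   (b - a) * (#|[pred k | ~~ (a < s k)]|%:R - #|[pred k | a < s k]|%:R).
  rewrite -sumrB (bigID (fun k => a < s k)) /=.
  rewrite (eq_bigr (fun _ => a - b)); last first.
    move=> k ak; have bk : b <= s k.
      by rewrite leNgt; apply/negP => bk; apply: (nb k); rewrite ak bk.
    rewrite !ler0_norm ?subr_le0 ?(ltW ak) //; lra.
  rewrite [X in _ + X](eq_bigr (fun _ => b - a)); last first.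
    move=> k; rewrite -leNgt => ak.
    rewrite !ger0_norm ?subr_ge0 //; [lra| lra].
  rewrite !sumr_const /=.
  idtac.
  rewrite -[(a - b) *+ _]mulr_natr -[(b - a) *+ _]mulr_natr.
  rewrite mulrBr addrC; congr (_ + _); last by rewrite -mulNr opprB.
rewrite /gf; lra.
Qed.

Lemma cardN a : #|[pred k | ~~ (a < s k)]| = (n - #|[pred k | (a < s k)%R]|)%N :> nat.
Proof.
have := cardC [pred k | a < s k]; rewrite card_ord => E.
apply/eqP; rewrite -(eqn_add2l #|[pred k | (a < s k)%R]|) subnKC; last by rewrite -[X in (_ <= X)%N]E leq_addr.
by rewrite -[X in _ == X]E eqn_add2l; apply/eqP/eq_card.
Qed.

Lemma Mb i j : Mset tau s i j ->
  (#|[pred k | (s j < s k)%R]| <= i < #|[pred k | (s j <= s k)%R]|)%N.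
Proof.
move=> /Mset_g H; set v := s j.
apply/andP; split.
  rewrite leqNgt; apply/negP => Gi.
  have : (0 < #|[pred k | (v < s k)%R]|)%N by apply: leq_ltn_trans Gi.
  case/card_gt0P => k0 Hk0.
  case: (@arg_minP _ _ _ k0 (fun k => v < s k) s Hk0) => w Pw Hw.
  have nb : forall k, ~ (v < s k < s w).
    by move=> k /andP[h1 h2]; have := Hw k h1; rewrite leNgt h2.
  have Hd := gdiff i Pw nb; rewrite cardN in Hd.
  have Hle := H w; rewrite -/v in Hle.
  have Gn : (#|[pred k | (v < s k)%R]| <= n)%N by apply: leq_trans (max_card _) _; rewrite card_ord.
  rewrite natrB // in Hd.
  have Hp : 0 < s w - v by rewrite subr_gt0.
  move: Gi; rewrite -(ler_nat R) => Gi.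
  set G := #|[pred k | (v < s k)%R]|%:R in Hd Gi.
  have Hq : 0 < (n%:R + 1 - 2 * (i.+1)%:R - (n%:R - G - G)) by lra.
  have := mulr_gt0 Hp Hq; lra.
rewrite ltnNge; apply/negP => Bi.
have E := cardC [pred k | (v <= s k)%R]; rewrite card_ord in E.
have : (0 < #|[predC [pred k | (v <= s k)%R]]|)%N.
  have iltn := ltn_ord i.
  rewrite lt0n; apply/eqP => E0; rewrite E0 addn0 in E.
  by move: Bi; rewrite E leqNgt iltn.
case/card_gt0P => k0; rewrite !inE -ltNge => Hk0.
case: (@arg_maxP _ _ _ k0 (fun k => s k < v) s Hk0) => u Pu Hu.
have nb : forall k, ~ (s u < s k < v).
  by move=> k /andP[h1 h2]; have h3 : s k <= s u := Hu k h2; by rewrite leNgt h1 in h3.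
have Hd := gdiff i Pu nb; rewrite cardN in Hd.
have EB : #|[pred k | (s u < s k)%R]| = #|[pred k | (v <= s k)%R]|.
  apply: eq_card => k; rewrite !inE.
  apply/idP/idP => h; last by apply: lt_le_trans Pu h.
  by rewrite leNgt; apply/negP => h2; apply: (nb k); rewrite h h2.
rewrite EB in Hd.
have Hle := H u; rewrite -/v in Hle.
have Gn : (#|[pred k | (v <= s k)%R]| <= n)%N by apply: leq_trans (max_card _) _; rewrite card_ord.
rewrite natrB // in Hd.
have Hp : 0 < v - s u by rewrite subr_gt0.
move: Bi; rewrite -ltnS -(ler_nat R) => Bi.
set G := #|[pred k | (v <= s k)%R]|%:R in Hd Bi.
rewrite -addn1 natrD in Bi.
have Hq : 0 < - (n%:R + 1 - 2 * (i.+1)%:R - (n%:R - G - G)) by lra.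
have := mulr_gt0 Hp Hq; lra.
Qed.

Definition Gc (v : R) := #|[pred k | (v < s k)%R]|.

Lemma choose_ok (i : 'I_n) (p : seq 'I_n) :
  uniq p -> (forall v, (count (fun j => s j == v) p <= i - Gc v)%N) ->
  Mset tau s i (choose_z tau s i p) /\ choose_z tau s i p \notin p.
Proof.
move=> up cp.
case: (@arg_maxP _ _ _ i predT (Phat tau s i) isT) => j0 _ Hj0.
have M0 : Mset tau s i j0 by apply/forallP => j'; exact: (Hj0 j' isT).
set v := s j0.
have /andP[b1 b2] := Mb M0.
have [j /andP[/eqP hj jp]] : exists j, (s j == v) && (j \notin p).
  apply/existsP; case: (boolP [exists x, (s x == v) && (x \notin p)]) => // /existsPn H; exfalso.
  have c1 : (#|[pred x | s x == v]| <= count (fun j => s j == v) p)%N.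
    rewrite -size_filter.
    have uf : uniq (filter (fun j => s j == v) p) by rewrite filter_uniq.
    rewrite -(card_uniqP uf); apply: subset_leq_card; apply/subsetP => x.
    rewrite !inE mem_filter => hx; rewrite hx /=.
    by have := H x; rewrite hx /= negbK.
  have c2 : (#|[pred x | s x == v]| + Gc v = #|[pred k | (v <= s k)%R]|)%N.
    rewrite /Gc addnC -(cardID [pred k | (v < s k)%R] [pred k | (v <= s k)%R]).
    congr addn; apply: eq_card => x; rewrite !inE.
      by case: (ltgtP v (s x)).
    by case: (ltgtP v (s x)) => h //=.
  have c3 := cp v; rewrite /Gc in c2 c3; rewrite /v in c1 c2 c3; lia.
have Mj : Mset tau s i j.
  apply/forallP => j'; rewrite /Phat /score hj; exact: (forallP M0 j').
have jin : j \in [seq x <- [seq x <- enum 'I_n | Mset tau s i x] | x \notin p].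
  by rewrite !mem_filter jp Mj /= -enumT mem_enum.
rewrite /choose_z /=.
case E : [seq x <- [seq x <- enum 'I_n | Mset tau s i x] | x \notin p] => [|c l].
  by rewrite E in jin.
have : c \in [seq x <- [seq x <- enum 'I_n | Mset tau s i x] | x \notin p] by rewrite E inE eqxx.
by rewrite !mem_filter => /andP[-> /andP[-> _]].
Qed.

Lemma zseq_inv k : (k <= n)%N ->
  [/\ size (zseq tau s k) = k, uniq (zseq tau s k) &
      forall v, (count (fun j => s j == v) (zseq tau s k) <= k - Gc v)%N].
Proof.
elim: k => [_|k IH kn] /=.
  by split => // v; rewrite sub0n.
have [sz up cp] := IH (ltnW kn).
case: insubP => [i _ ik|]; last by rewrite kn.
have cp' : forall v, (count (fun j => s j == v) (zseq tau s k) <= i - Gc v)%N by rewrite ik.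
have [Mc nc] := choose_ok up cp'.
set c := choose_z tau s i (zseq tau s k) in Mc nc *.
have /andP[b1 _] := Mb Mc.
split.
- by rewrite size_rcons sz.
- by rewrite rcons_uniq nc up.
- move=> v; rewrite -cats1 count_cat /= addn0.
  have := cp v; rewrite /Gc -ik in b1 *.
  case: (eqVneq (s c) v) => [<-|_] /=; lia.
Qed.
End P.

Unset Implicit Arguments.

Theorem proposition2 (R : realType) (n : nat) (hn : (1 <= n)%N)
  (tau : R) (htau : 0 < tau) (s : 'I_n -> R) :
  bijective (z tau s).
Proof.
apply: injF_bij => i1 i2.
have [sz up _] := @zseq_inv R n tau s htau n (leqnn n).
rewrite /z => E.
have h1 : (i1 < size (zseq tau s n))%N by rewrite sz.
have h2 : (i2 < size (zseq tau s n))%N by rewrite sz.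
move: E; rewrite (set_nth_default i1 i2 h2) => /eqP.
by rewrite nth_uniq // => /eqP /val_inj.
Qed.
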